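(* For any noisy discrete memoryless classical channel $N_n$, the parallel use of $N_n$ with a perfect $2$-level quantum channel cannot exhibit one-shot zero-error superadditivity under the vertex-encoding protocol; that is, no implementation of the vertex-encoding protocol with $d=2$ transmits more than $\alpha(G(N_n))\cdot 2$ messages.
   Context: A discrete memoryless classical channel $N$ has finite input alphabet $\mathcal{X}$, finite output alphabet $\mathcal{Y}$ and conditional probabilities $P(y|x)$. Distinct inputs $x,x'$ are confusable if some output $y$ has $P(y|x)>0$ and $P(y|x')>0$; the confusability graph $G(N)$ has vertex set $\mathcal{X}$ and edges between distinct confusable inputs, and $\alpha(G(N))$ (its independence number) is the one-shot zero-error capacity of $N$. For each output $y$, the hyperedge $h_y=\{x: P(y|x)>0\}$. A perfect $d$-level quantum channel is the identity channel on states of $\mathbb{C}^d$, with one-shot zero-error capacity $d$. The vertex-encoding protocol with a perfect $d$-level quantum channel: one assigns to every input $v\in\mathcal{X}$ a unit vector $\ket{\psi_v}\in\mathbb{C}^d$ such that $\ket{\psi_v}\perp\ket{\psi_w}$ whenever $v,w$ are adjacent in $G(N)$. Messages are identified with the $n=|\mathcal{X}|$ inputs; to send $v$, the sender inputs $v$ into $N$ and sends $\ket{\psi_v}$ through the perfect quantum channel; upon seeing output $y$, the receiver performs a projective measurement containing the projectors $\ket{\psi_w}\!\bra{\psi_w}$, $w\in h_y$ (completed to the identity), which identifies $v$ with certainty. The protocol transmits $n$ messages with zero error, and it exhibits one-shot zero-error superadditivity if $n>\alpha(G(N))\cdot d$. *)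

(* Defs.v *)
From HB Require Import structures.
From mathcomp Require Import all_boot all_order all_algebra.
From mathcomp Require Import complex.
From mathcomp Require Import reals.
Set Implicit Arguments. Unset Strict Implicit. Unset Printing Implicit Defensive.
Import Order.TTheory GRing.Theory Num.Theory.
Local Open Scope ring_scope.

Section Channel.
Variables (R : realType) (X Y : finType).

(* A discrete memoryless classical channel: conditional probabilities P(y|x),
   written P x y. *)
Definition is_channel (P : X -> Y -> R) : Prop :=
  (forall x y, 0 <= P x y) /\ (forall x, \sum_(y : Y) P x y = 1).

Definition confusable (P : X -> Y -> R) (x x' : X) : bool :=
  (x != x') && [exists y : Y, (0 < P x y) && (0 < P x' y)].

Definition independent (P : X -> Y -> R) (S : {set X}) : bool :=
  [forall x in S, forall x' in S, ~~ confusable P x x'].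

Definition alpha (P : X -> Y -> R) : nat :=
  \max_(S : {set X} | independent P S) #|S|.

Definition cinner (d : nat) (u v : 'cV[R[i]]_d) : R[i] :=
  \sum_(k < d) (u k 0)^* * v k 0.

(* orthogonal representation of G(N) in C^d by unit vectors: the data of
   the vertex-encoding protocol with a perfect d-level quantum channel *)
Definition vertex_encoding (P : X -> Y -> R) (d : nat)
  (psi : X -> 'cV[R[i]]_d) : Prop :=
  (forall v, cinner (psi v) (psi v) = 1) /\
  (forall v w, confusable P v w -> cinner (psi v) (psi w) = 0).

End Channel.

(* Main.v *)
Require Import Defs.
From HB Require Import structures.
From mathcomp Require Import all_boot all_order all_algebra.
From mathcomp Require Import complex.
From mathcomp Require Import reals.
From mathcomp Require Import ring.
Set Implicit Arguments. Unset Strict Implicit. Unset Printing Implicit Defensive.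
Import Order.TTheory GRing.Theory Num.Theory.
Local Open Scope ring_scope.

Section G.
Variable C : numClosedFieldType.

Definition lexpos (x y z : C) : bool :=
  (0 < x) || (x == 0) && ((0 < y) || (y == 0) && (0 < z)).

Lemma lexposN x y z : x \is Num.real -> y \is Num.real -> z \is Num.real ->
  ~~ [&& x == 0, y == 0 & z == 0] -> lexpos (-x) (-y) (-z) = ~~ lexpos x y z.
Proof.
move=> rx ry rz nz; rewrite /lexpos !oppr_gt0 !oppr_eq0.
case: (real_ltgtP rx (real0 _)) nz => //= _;
case: (real_ltgtP ry (real0 _)) => //= _;
case: (real_ltgtP rz (real0 _)) => //=.
Qed.

Definition col2 (a b : C) := lexpos (a^* * a - b^* * b) ('Re (a^* * b)) ('Im (a^* * b)).

Lemma col2_orth a b w1 w2 :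
  a^* * a + b^* * b = 1 -> w1^* * w1 + w2^* * w2 = 1 ->
  a^* * w1 + b^* * w2 = 0 -> col2 w1 w2 = ~~ col2 a b.
Proof.
move=> hu hw ho.
have E : a^* * w1 = - (b^* * w2) by apply/eqP; rewrite -subr_eq0 opprK ho.
have E' := congr1 Num.conj E; rewrite rmorphN !rmorphM /= !conjCK in E'.
have h1 : a^* * a * (w1^* * w1) = b^* * b * (w2^* * w2).
  have -> : a^* * a * (w1^* * w1) = (a^* * w1) * (a * w1^*) by ring.
  rewrite E E'; ring.
have hW1 : w1^* * w1 = b^* * b.
  have key : w1^* * w1 - b^* * b = (a^* * a * (w1^* * w1) - b^* * b * (w2^* * w2))
     - b^* * b * (1 - (w1^* * w1 + w2^* * w2)) + (1 - (a^* * a + b^* * b)) * (w1^* * w1) by ring.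
  by apply/eqP; rewrite -subr_eq0 key h1 hw hu !subrr mulr0 mul0r !subr0 addr0.
have hW2 : w2^* * w2 = a^* * a.
  by apply/eqP; rewrite -(inj_eq (addrI (w1^* * w1))) hw hW1 addrC hu.
have hZ : w1^* * w2 = - (a^* * b).
  have h2 : b^* * b * (a^* * b + w1^* * w2) = 0.
    have -> : b^* * b * (a^* * b + w1^* * w2) = (a^* * w1) * (b * w1^*) + (b^* * w2) * (b * w1^*) - (w1^* * w1 - b^* * b) * (a^* * b) by ring.
    by rewrite E hW1 subrr mul0r subr0 mulNr addNr.
  case: (eqVneq (b^* * b) 0) => hb.
    have b0 : b = 0 by apply/eqP; rewrite -mul_conjC_eq0 mulrC hb.
    have w10 : w1 = 0 by apply/eqP; rewrite -mul_conjC_eq0 mulrC hW1 hb.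
    by rewrite b0 w10 rmorph0 !mul0r mulr0 oppr0.
  move/eqP: h2; rewrite mulf_eq0 (negPf hb) /= addrC addr_eq0 => /eqP //.
rewrite /col2 hW1 hW2 hZ !raddfN /= -opprB lexposN ?Creal_Re ?Creal_Im //.
- by rewrite rpredB // ger0_real // mulrC mul_conjC_ge0.
apply/negP => /and3P [/eqP d0 /eqP r0 /eqP i0].
have z0 : a^* * b = 0 by rewrite [LHS]Crect r0 i0 mulr0 addr0.
have AB : (a^* * a) * (b^* * b) = 0.
  have -> : (a^* * a) * (b^* * b) = (a^* * b) * (b^* * a) by ring.
  by rewrite z0 mul0r.
have eAB : a^* * a = b^* * b by apply/eqP; rewrite -subr_eq0 d0.
move: AB; rewrite -eAB => /eqP; rewrite mulf_eq0 orbb => /eqP A0.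
by move: hu; rewrite -eAB A0 addr0 => /eqP; rewrite eq_sym oner_eq0.
Qed.
End G.

Lemma indep_le_alpha (R : realType) (X Y : finType) (P : X -> Y -> R) (S : {set X}) :
  independent P S -> (#|S| <= alpha P)%N.
Proof. by move=> h; rewrite /alpha; apply: (leq_bigmax_cond S h). Qed.

Theorem corollary1 (R : realType) (X Y : finType) (P : X -> Y -> R)
  (psi : X -> 'cV[R[i]]_2) :
  is_channel P -> vertex_encoding P psi ->
  (#|X| <= alpha P * 2)%N.
Proof.
move=> _ [hn ho].
pose c v := col2 (psi v ord0 0) (psi v (lift ord0 ord0) 0).
have hc v w : confusable P v w -> c w = ~~ c v.
  move=> hvw; rewrite /c; apply: col2_orth.
  - by have := hn v; rewrite /cinner !big_ord_recl big_ord0 addr0.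
  - by have := hn w; rewrite /cinner !big_ord_recl big_ord0 addr0.
  - by have := ho v w hvw; rewrite /cinner !big_ord_recl big_ord0 addr0.
pose S := [set v | c v].
have i1 : independent P S.
  apply/forall_inP => x xS; apply/forall_inP => y yS; apply/negP => /hc.
  by move: xS yS; rewrite !inE => -> ->.
have i2 : independent P (~: S).
  apply/forall_inP => x xS; apply/forall_inP => y yS; apply/negP => /hc.
  by move: xS yS; rewrite !inE => /negPf -> /negPf ->.
rewrite -(cardsC S) muln2 -addnn.
by apply: leq_add; apply: indep_le_alpha.
Qed.
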